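(* Let $\mathcal{I}$ be an index set, $S$ a non-empty finite set, and $\emptyset\ne\mathcal{K}_\iota\subseteq S$ for $\iota\in\mathcal{I}$; define $\varepsilon_{i,j}=1$ if $\mathcal{K}_i\cap\mathcal{K}_j=\emptyset$ and $\varepsilon_{i,j}=0$ otherwise. Let $(\iota_1,\dots,\iota_k)\in I^\varepsilon_k$, and let $\sigma\in\tilde S_k$ be such that for every $s\in S$ the induced permutation $\sigma_s$ of $J_s$ describes a non-crossing partition of $J_s$. Then $\sigma$ has at least one fixed point.
   Context: $I^\varepsilon_k$ is the set of $(i_1,\dots,i_k)\in\mathcal{I}^k$ such that whenever $i_j=i_\ell$ with $j<\ell$ there is $m$ with $j<m<\ell$, $i_m\ne i_j$ and $\varepsilon_{i_ji_m}=0$. $\tilde S_k=\{\sigma\in S_k:\iota_{\sigma(j)}=\iota_j\text{ for all }j\}$. For $s\in S$, $J_s=\{j\in\{1,\dots,k\}:s\in\mathcal{K}_{\iota_j}\}$, which is preserved by every $\sigma\in\tilde S_k$; $\sigma_s$ is the restriction of $\sigma$ to $J_s$. A permutation describes a non-crossing partition if the partition into its cycles is non-crossing with respect to the natural order of $J_s$. *)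

(* Defs.v *)
From mathcomp Require Import all_boot all_fingroup.
Set Implicit Arguments. Unset Strict Implicit. Unset Printing Implicit Defensive.

Definition eps (I : Type) (S : finType) (K : I -> {set S}) (i j : I) : bool :=
  K i :&: K j == set0.

Definition in_Ieps (I : Type) (S : finType) (K : I -> {set S}) (k : nat)
  (iota : 'I_k -> I) : Prop :=
  forall j l : 'I_k, (j < l)%N -> iota j = iota l ->
    exists m : 'I_k, [/\ (j < m)%N, (m < l)%N, iota m <> iota j
                        & ~~ eps K (iota j) (iota m)].

Definition in_tildeS (I : Type) (k : nat) (iota : 'I_k -> I) (sigma : 'S_k) : Prop :=
  forall j : 'I_k, iota (sigma j) = iota j.

Definition Jset (I : Type) (S : finType) (K : I -> {set S}) (k : nat)
  (iota : 'I_k -> I) (s : S) : {set 'I_k} :=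
  [set j : 'I_k | s \in K (iota j)].

Definition noncrossing (k : nat) (P : {set {set 'I_k}}) : Prop :=
  forall A B : {set 'I_k}, A \in P -> B \in P -> A != B ->
    forall a b c d : 'I_k, a \in A -> c \in A -> b \in B -> d \in B ->
      ~ [/\ (a < b)%N, (b < c)%N & (c < d)%N].

(* the partition of J into the cycles of sigma restricted to J (J is assumed
   sigma-stable, so the cycle of sigma_s through j is the sigma-orbit of j) *)
Definition cycles_on (k : nat) (sigma : 'S_k) (J : {set 'I_k}) : {set {set 'I_k}} :=
  [set porbit sigma j | j in J].

(* Main.v *)
Require Import Defs.
From mathcomp Require Import all_boot all_fingroup.
From mathcomp Require Import zify.

Lemma iota_orbit (I : Type) (k : nat) (iota : 'I_k -> I) (sigma : 'S_k) :
  in_tildeS iota sigma -> forall j l, l \in porbit sigma j -> iota l = iota j.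
Proof.
move=> Ht j l /porbitP [i ->]; rewrite permX.
elim: i => //= i IH; by rewrite Ht.
Qed.

Lemma sig_in (k : nat) (sigma : 'S_k) (j : 'I_k) : sigma j \in porbit sigma j.
Proof. have := mem_porbit sigma 1 j; by rewrite expg1. Qed.

Arguments iota_orbit {I k iota sigma} _ {j l} _.
Arguments sig_in {k} sigma j.

Theorem mainTheorem4 (I : Type) (S : finType) (K : I -> {set S})
  (k : nat) (iota : 'I_k -> I) (sigma : 'S_k) :
  (0 < #|S|)%N ->
  (forall i : I, K i != set0) ->
  (0 < k)%N ->
  in_Ieps K iota ->
  in_tildeS iota sigma ->
  (forall s : S, noncrossing (cycles_on sigma (Jset K iota s))) ->
  exists j : 'I_k, sigma j = j.
Proof.
move=> _ _ k0 Heps Ht Hnc.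
case: (boolP [exists j, sigma j == j]) => [/existsP [j /eqP]|Hno]; first by eauto.
exfalso.
have nofix : forall j, sigma j != j.
  by move=> j; apply/negP => E; move/negP: Hno; apply; apply/existsP; exists j.
suff H : forall n (j l : 'I_k), (j < l)%N -> (l - j <= n)%N ->
    l \in porbit sigma j -> False.
  pose j0 : 'I_k := Ordinal k0.
  have hn := nofix j0.
  have hin := sig_in sigma j0.
  case: (ltngtP j0 (sigma j0)) => [lt|gt|eq].
  - exact: (H _ _ _ lt (leqnn _) hin).
  - by apply: (H _ _ _ gt (leqnn _)); rewrite porbit_sym.
  - by move/eqP: hn; apply; apply: val_inj.
elim=> [|n IH] j l jl; first by lia.
move=> dist lin.
have il := iota_orbit Ht lin.
have [m [jm ml neq neps]] := Heps j l jl (esym il).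
move: neps; rewrite /eps => /set0Pn [s]; rewrite inE => /andP [sj sm].
have Hm : m \notin porbit sigma j.
  by apply/negP => /(iota_orbit Ht).
set m' := sigma m.
have m'in : m' \in porbit sigma m := sig_in sigma m.
have m'ne : m' != m := nofix m.
have m'j : m' \notin porbit sigma j.
  apply/negP => h; move/negP: Hm; apply.
  rewrite -eq_porbit_mem in h; rewrite -(eqP h) porbit_sym; done.
have jJ : j \in Jset K iota s by rewrite inE.
have mJ : m \in Jset K iota s by rewrite inE.
have Aj : porbit sigma j \in cycles_on sigma (Jset K iota s) by apply: imset_f.
have Am : porbit sigma m \in cycles_on sigma (Jset K iota s) by apply: imset_f.
have AB : porbit sigma j != porbit sigma m.
  apply/negP => /eqP E; move/negP: Hm; apply; rewrite E; exact: porbit_id.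
have m'j' : m' != j.
  apply/negP => /eqP E; move/negP: m'j; apply; rewrite E; exact: porbit_id.
have m'l' : m' != l.
  by apply/negP => /eqP E; move/negP: m'j; apply; rewrite E.
have m'j2 : (nat_of_ord m' != j) by [].
have m'l2 : (nat_of_ord m' != l) by [].
have m'm2 : (nat_of_ord m' != m) by [].
case: (ltngtP m' l) => [m'l|lm'|e]; last by rewrite e eqxx in m'l2.
- case: (ltngtP m' j) => [m'j3|jm'|e]; last by rewrite e eqxx in m'j2.
  + have BA : porbit sigma m != porbit sigma j by rewrite eq_sym.
    apply: (Hnc s _ _ Am Aj BA m' j m l m'in (porbit_id _ _) (porbit_id _ _) lin).
    by split.
  + case: (ltngtP m m') => [mm'|m'm|e]; last by rewrite e eqxx in m'm2.
    * apply: (IH m m' mm') => //; clearbody m'; clear -dist jm ml jm' m'l mm'; lia.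
    * apply: (IH m' m m'm); [clearbody m'; clear -dist jm ml jm' m'l m'm; lia|by rewrite porbit_sym].
- apply: (Hnc s _ _ Aj Am AB j m l m' (porbit_id _ _) lin (porbit_id _ _) m'in).
  by split.
Qed.
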